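(* Let $G$ be a strongly connected digraph with at least one arc (loops and multiple arcs allowed). Then $D(LG)=D(G)$ if and only if $G$ is a directed cycle.
   Context: Digraphs are finite and may have loops and multiple arcs. For vertices $u,v$, $\mathrm{dist}_G(u,v)$ is the length of a shortest directed walk from $u$ to $v$ (so $\mathrm{dist}_G(u,u)=0$). $G$ is strongly connected if $\mathrm{dist}_G(u,v)<\infty$ for all $u,v$, and its diameter is $D(G)=\max_{u,v}\mathrm{dist}_G(u,v)$. The line digraph $LG$ has as vertex set the set of arcs of $G$, with an arc from $e$ to $f$ whenever the head (final vertex) of $e$ equals the tail (initial vertex) of $f$. A directed cycle is a digraph with vertices $v_0,\dots,v_{n-1}$ ($n\ge1$) and exactly the arcs $(v_i,v_{i+1 \bmod n})$. *)

(* Defs.v *)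
From mathcomp Require Import all_boot.
Set Implicit Arguments. Unset Strict Implicit. Unset Printing Implicit Defensive.

Record digraph := Digraph {
  dvert : finType;
  darc : finType;
  tail : darc -> dvert;
  head : darc -> dvert }.

Fixpoint walk (G : digraph) (k : nat) (u v : dvert G) : Prop :=
  match k with
  | 0 => u = v
  | k'.+1 => exists a : darc G, tail a = u /\ @walk G k' (head a) v
  end.
Arguments walk : clear implicits.

Definition is_dist (G : digraph) (u v : dvert G) (d : nat) : Prop :=
  walk G d u v /\ forall k, walk G k u v -> d <= k.

Definition strongly_connected (G : digraph) : Prop :=
  forall u v : dvert G, exists k, walk G k u v.

Definition is_diam (G : digraph) (D : nat) : Prop :=
  (forall u v : dvert G, exists d, is_dist u v d /\ d <= D) /\
  (exists u v : dvert G, is_dist u v D).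

Definition line_arc (G : digraph) : finType :=
  {p : darc G * darc G | head p.1 == tail p.2}.

Definition line_digraph (G : digraph) : digraph :=
  @Digraph (darc G) (line_arc G)
    (fun p : line_arc G => (val p).1) (fun p : line_arc G => (val p).2).

(* G is (isomorphic to) a directed cycle on n+1 >= 1 vertices
   v_0,...,v_n with exactly the arcs (v_i, v_{i+1 mod n+1}). *)
Definition is_dicycle (G : digraph) : Prop :=
  exists n (f : 'I_n.+1 -> dvert G) (g : 'I_n.+1 -> darc G),
    bijective f /\ bijective g /\
    forall i, tail (g i) = f i /\ head (g i) = f (ordS i).

(* Main.v *)
Require Import Defs.
From mathcomp Require Import all_boot.
From mathcomp Require Import zify.
Set Implicit Arguments. Unset Strict Implicit. Unset Printing Implicit Defensive.
Local Notation head := Defs.head.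
Local Notation tail := Defs.tail.

Lemma walk_snoc (G : digraph) k (x y : dvert G) (a : darc G) :
  walk G k x y -> tail a = y -> walk G k.+1 x (head a).
Proof.
elim: k x => [|k IH] x /=.
  by move=> -> <-; exists a.
by move=> [b [<- Hb]] Ha; exists b; split=> //; apply: IH.
Qed.

Lemma walk_last (G : digraph) k (x y : dvert G) :
  walk G k.+1 x y -> exists a, walk G k x (tail a) /\ head a = y.
Proof.
elim: k x => [|k IH] x /=.
  by move=> [a [<- <-]]; exists a.
move=> [a [<- Ha]]; have [b [Hb1 Hb2]] := IH _ Ha.
by exists b; split=> //; exists a.
Qed.

Lemma walk_LG (G : digraph) k (e f : darc G) :
  walk (line_digraph G) k.+1 e f -> walk G k (head e) (tail f).
Proof.
elim: k e => [|k IH] e /=.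
  by move=> [p [<- <-]]; apply/eqP; exact: (valP p).
move=> [p [<- Hp]]; exists (val p).2; split; first by apply/esym/eqP; exact: (valP p).
exact: IH.
Qed.

Lemma ex_in (G : digraph) (a0 : darc G) : strongly_connected G ->
  forall u, exists e : darc G, head e = u.
Proof.
move=> Hsc u; have [[|k] Hk] := Hsc (head a0) u.
  by exists a0.
by have [a [_ Ha]] := walk_last Hk; exists a.
Qed.

Lemma ex_out (G : digraph) (a0 : darc G) : strongly_connected G ->
  forall v, exists e : darc G, tail e = v.
Proof.
move=> Hsc v; have [[|k] Hk] := Hsc v (tail a0).
  by exists a0.
by case: Hk => a [Ha _]; exists a.
Qed.

Lemma key (G : digraph) D
  (HLG : forall e f : darc G, exists d, @is_dist (line_digraph G) e f d /\ d <= D)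
  (u v : dvert G) (Hd : is_dist u v D) (e f : darc G) :
  head e = u -> tail f = v -> e = f.
Proof.
move=> He Hf; case: (eqVneq e f) => // Hne.
have [[|d] [[Hw _] Hle]] := HLG e f.
  by move: Hw => /= Hw; rewrite Hw eqxx in Hne.
have := walk_LG Hw; rewrite He Hf => /(proj2 Hd) HD.
by have := leq_ltn_trans HD Hle; rewrite ltnn.
Qed.

Lemma Qsucc (G : digraph) D (a0 : darc G) (Hsc : strongly_connected G)
  (HLG : forall e f : darc G, exists d, @is_dist (line_digraph G) e f d /\ d <= D)
  (v : dvert G) (c : darc G) :
  (exists u, is_dist u v D) -> tail c = v -> exists w, is_dist w (head c) D.
Proof.
move=> [u Hd] Hc.
have [e He] := ex_in a0 Hsc u.
have Hec := key HLG Hd He Hc; subst e.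
rewrite He.
have Hin : forall b : darc G, head b = u -> tail b = v.
  by move=> b Hb; rewrite (key HLG Hd Hb Hc).
case: Hd => Hw Hmin.
destruct D as [|D'].
  by exists u; split=> //= k _.
case: Hw => a [Ha Hw]; exists (head a); split.
  by rewrite -He; apply: walk_snoc Hw Hc.
move=> [|k] Hk.
  by move: Hk => /= Hk; rewrite Hk in Hw; have := Hmin _ Hw; rewrite ltnn.
have [b [Hb1 Hb2]] := walk_last Hk.
rewrite (Hin b Hb2) in Hb1.
by apply: Hmin; exists a.
Qed.

Lemma allQ (G : digraph) D (a0 : darc G) (Hsc : strongly_connected G)
  (HLG : forall e f : darc G, exists d, @is_dist (line_digraph G) e f d /\ d <= D)
  k (v x : dvert G) :
  (exists u, is_dist u v D) -> walk G k v x -> exists u, is_dist u x D.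
Proof.
elim: k v => [|k IH] v /=; first by move=> H <-.
move=> HQ [a [Ha Hw]]; apply: IH Hw.
exact: (Qsucc a0 Hsc HLG HQ Ha).
Qed.

Lemma make_cycle (G : digraph) (a0 : darc G) (Hsc : strongly_connected G)
  (Hu : forall a b : darc G, tail a = tail b -> a = b) : is_dicycle G.
Proof.
pose arc_of (x : dvert G) := odflt a0 [pick a | tail a == x].
have tailA x : tail (arc_of x) = x.
  rewrite /arc_of; case: pickP => [a /eqP //| H].
  by have [f Hf] := ex_out a0 Hsc x; move: (H f); rewrite Hf eqxx.
have arcT a : arc_of (tail a) = a by apply: Hu; rewrite tailA.
pose nxt x := head (arc_of x).
have walk_iter k x y : walk G k x y -> y = iter k nxt x.
  elim: k x => [|k IH] x /=; first by move->.
  move=> [a [Ha Hw]]; rewrite (IH _ Hw) -iterS iterSr; congr (iter _ _ _).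
  by have -> : a = arc_of x by apply: Hu; rewrite tailA.
have fconn x y : fconnect nxt x y.
  by have [k /walk_iter ->] := Hsc x y; apply: fconnect_iter.
pose x0 := tail a0.
pose n := (order nxt x0).-1.
have Hn : n.+1 = order nxt x0 by rewrite orderSpred.
pose f (i : 'I_n.+1) := iter i nxt x0.
pose h (y : dvert G) : 'I_n.+1 := inord (findex nxt x0 y).
have fK : cancel f h.
  move=> i; apply: val_inj; rewrite /h /f /= findex_iter ?inordK //.
  by rewrite -Hn (ltn_ord i).
have hK : cancel h f.
  move=> y; rewrite /h /f inordK ?iter_findex //.
  by rewrite Hn findex_max.
exists n, f, (fun i => arc_of (f i)); split; first by exists h.
split.
  exists (fun a => h (tail a)) => [i|a]; first by rewrite tailA fK.
  by rewrite hK arcT.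
move=> i; split; first exact: tailA.
rewrite -/(nxt (f i)) /f /=.
have [Hlt|Heq] := ltnP i.+1 n.+1.
  by rewrite modn_small.
have Hi : (i : nat) = n by apply/eqP; rewrite eqn_leq -ltnS ltn_ord.
rewrite Hi modnn /= -iterS Hn.
by apply/(orbitPcycle 2 4); apply: fconn.
Qed.

Lemma val_iter_ordS n (i : 'I_n.+1) k : val (iter k (@ordS _) i) = (i + k) %% n.+1.
Proof.
elim: k => [|k IH]; first by rewrite addn0 modn_small.
by rewrite iterS /= IH addnS -addn1 modnDml addn1.
Qed.

Lemma cyc_diam (G : digraph) n (f : 'I_n.+1 -> dvert G) (g : 'I_n.+1 -> darc G) :
  bijective f -> bijective g ->
  (forall i, tail (g i) = f i /\ head (g i) = f (ordS i)) -> is_diam G n.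
Proof.
move=> [fi fK fiK] [gi gK giK] Hfg.
have walkf k i v : walk G k (f i) v -> v = f (iter k (@ordS _) i).
  elim: k i => [|k IH] i /=; first by move->.
  move=> [a [Ha Hw]].
  rewrite -(giK a) in Ha Hw; have [Ht Hh] := Hfg (gi a).
  have Hm : gi a = i by apply: (can_inj fK); rewrite -Ht.
  by rewrite Hh Hm in Hw; rewrite (IH _ Hw) -iterS iterSr.
have walkf2 k i : walk G k (f i) (f (iter k (@ordS _) i)).
  elim: k i => [|k IH] i //=.
  exists (g i); have [Ht Hh] := Hfg i; split=> //; rewrite Hh -iterS iterSr; exact: IH.
have Hdist i j : is_dist (f i) (f j) ((j + n.+1 - i) %% n.+1).
  split.
    set d := (j + n.+1 - i) %% n.+1.
    suff Hj : iter d (@ordS _) i = j by rewrite -Hj; apply: walkf2.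
    apply: val_inj; rewrite val_iter_ordS /= modnDmr.
    have -> : i + (j + n.+1 - i) = j + n.+1.
      by have := ltn_ord i; have := ltn_ord j; lia.
    by rewrite modnDr modn_small.
  move=> k /walkf /(can_inj fK) Hj.
  have Hjv : (j : nat) = (i + k) %% n.+1 by rewrite Hj val_iter_ordS.
  have -> : (j + n.+1 - i) %% n.+1 = k %% n.+1.
    apply/eqP; rewrite -(eqn_modDl i).
    have -> : i + (j + n.+1 - i) = j + n.+1.
      by have := ltn_ord i; have := ltn_ord j; lia.
    by rewrite modnDr Hjv modn_mod.
  exact: leq_mod.
split.
  move=> u v; rewrite -(fiK u) -(fiK v).
  by eexists; split; [apply: Hdist | rewrite -ltnS ltn_pmod].
exists (f ord0), (f ord_max).
have := Hdist ord0 ord_max; rewrite /= subn0 modnDr modn_small //.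
Qed.

Lemma cyc_LG (G : digraph) n (f : 'I_n.+1 -> dvert G) (g : 'I_n.+1 -> darc G) :
  bijective f -> bijective g ->
  (forall i, tail (g i) = f i /\ head (g i) = f (ordS i)) -> is_diam (line_digraph G) n.
Proof.
move=> [fi fK fiK] [gi gK giK] Hfg.
have Hp i : head (g i) == tail (g (ordS i)).
  by have [_ ->] := Hfg i; have [-> _] := Hfg (ordS i).
pose g' i : line_arc G := exist _ (g i, g (ordS i)) (Hp i).
apply: (@cyc_diam (line_digraph G) n g g'); first by exists gi.
2: by move=> i.
exists (fun p : line_arc G => gi (val p).1) => [i|p]; first by rewrite /= gK.
apply: val_inj; case: p => [[a b] /= /eqP Hab].
congr (_, _); first exact: giK.
rewrite -(giK b) in Hab *; congr (g _).
have [_ Hh] := Hfg (gi a); have [Ht _] := Hfg (gi b).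
rewrite -(giK a) Hh Ht in Hab.
exact: (can_inj fK Hab).
Qed.

Theorem proposition2p1 (G : digraph) :
  strongly_connected G -> 0 < #|darc G| ->
  ((exists D, is_diam G D /\ is_diam (line_digraph G) D) <-> is_dicycle G).
Proof.
move=> Hsc; case/card_gt0P => a0 _; split.
  move=> [D [[_ [u [v Huv]]] [HLG _]]].
  have HLG' : forall e f : darc G,
      exists d, @is_dist (line_digraph G) e f d /\ d <= D := HLG.
  apply: (make_cycle a0 Hsc) => a b Hab.
  have [k Hk] := Hsc v (tail a).
  have [w Hw] := allQ a0 Hsc HLG' (ex_intro _ u Huv) Hk.
  have [e He] := ex_in a0 Hsc w.
  by rewrite -(key HLG' Hw He (erefl _)) (key HLG' Hw He (esym Hab)).
move=> [n [f [g [Hf [Hg H]]]]]; exists n; split.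
  exact: cyc_diam Hf Hg H.
exact: cyc_LG Hf Hg H.
Qed.
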